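(* Let $1\le b<\frac{n}{2}-1$, and let $T$ be a tree attaining the maximum value of $M_1$ over $\mathcal{CT}^*_{n,b}$, or a tree attaining the maximum value of $M_2$ over $\mathcal{CT}^*_{n,b}$. Then: (a) if $n_2>0$ then $n_1=2b+2$, $n_2=n-3b-2$, $n_3=0$ and $n_4=b$; (b) $n_2=0$ if and only if $n_1=n-b$, $n_3=3b-n+2$ and $n_4=n-2b-2$.
   Context: A chemical tree is a tree with maximum degree at most $4$. A branching vertex is a vertex of degree greater than $2$. $\mathcal{CT}^*_{n,b}$ is the class of all $n$-vertex chemical trees with exactly $b$ branching vertices. $n_i$ denotes the number of vertices of degree $i$ in $T$. $M_1(G)=\sum_v d_v^2$ and $M_2(G)=\sum_{uv\in E(G)}d_ud_v$, where $d_v$ is the degree of $v$. *)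

(* Defs.v *)
From mathcomp Require Import all_boot all_order all_algebra.
Set Implicit Arguments. Unset Strict Implicit. Unset Printing Implicit Defensive.

Definition simple_graph (n : nat) (e : rel 'I_n) : Prop :=
  (forall u v, e u v = e v u) /\ (forall v, ~~ e v v).

Definition deg (n : nat) (e : rel 'I_n) (v : 'I_n) : nat := #|[set u | e v u]|.

Definition nedges (n : nat) (e : rel 'I_n) : nat :=
  #|[set p : 'I_n * 'I_n | e p.1 p.2 && (val p.1 < val p.2)%N]|.

Definition is_tree (n : nat) (e : rel 'I_n) : Prop :=
  simple_graph e /\ (forall u v, connect e u v) /\ nedges e = n.-1.

Definition chemical_tree (n : nat) (e : rel 'I_n) : Prop :=
  is_tree e /\ (forall v, (deg e v <= 4)%N).

Definition ndeg (n : nat) (e : rel 'I_n) (i : nat) : nat :=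
  #|[set v | deg e v == i]|.

Definition nbranch (n : nat) (e : rel 'I_n) : nat :=
  #|[set v | (2 < deg e v)%N]|.

Definition in_CTstar (n b : nat) (e : rel 'I_n) : Prop :=
  chemical_tree e /\ nbranch e = b.

Definition M1 (n : nat) (e : rel 'I_n) : nat := (\sum_(v : 'I_n) deg e v ^ 2)%N.

Definition M2 (n : nat) (e : rel 'I_n) : nat :=
  (\sum_(p : 'I_n * 'I_n | e p.1 p.2 && (val p.1 < val p.2)%N)
      deg e p.1 * deg e p.2)%N.

(* Main.v *)
Require Import Defs.
From mathcomp Require Import all_boot all_order all_algebra.
From mathcomp Require Import zify ring.
Import GRing.Theory Num.Theory.
Set Implicit Arguments. Unset Strict Implicit. Unset Printing Implicit Defensive.

Lemma card_sum (T : finType) (P : pred T) : #|[set z | P z]| = \sum_z (P z : nat).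
Proof.
rewrite -sum1_card big_mkcond /=; apply: eq_bigr => z _; rewrite inE; by case: (P z).
Qed.

Lemma sum_ind (T : finType) (a : T) (c : nat) : \sum_(z : T) (if z == a then c else 0) = c.
Proof. by rewrite -big_mkcond big_pred1_eq. Qed.

Lemma deg_sum (n : nat) (e : rel 'I_n) v : deg e v = \sum_u (e v u : nat).
Proof. by rewrite /deg card_sum. Qed.

Definition sw (n : nat) (p : 'I_n * 'I_n) := (p.2, p.1).

Lemma sw_inj n : injective (@sw n).
Proof. by move=> [a b] [c d] /= [-> ->]. Qed.

Lemma sym_sum (n : nat) (e : rel 'I_n) (g : 'I_n -> 'I_n -> nat) :
  simple_graph e -> (forall a b, g a b = g b a) ->
  \sum_(p : 'I_n * 'I_n) (if e p.1 p.2 then g p.1 p.2 else 0) =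
  2 * \sum_(p : 'I_n * 'I_n) (if e p.1 p.2 && (val p.1 < val p.2) then g p.1 p.2 else 0).
Proof.
move=> [sy irr] gs.
have -> : \sum_(p : 'I_n * 'I_n) (if e p.1 p.2 then g p.1 p.2 else 0) =
  \sum_(p : 'I_n * 'I_n) (if e p.1 p.2 && (val p.1 < val p.2) then g p.1 p.2 else 0) +
  \sum_(p : 'I_n * 'I_n) (if e p.1 p.2 && (val p.2 < val p.1) then g p.1 p.2 else 0).
  rewrite -big_split /=; apply: eq_bigr => [[a c]] _ /=.
  case E: (e a c) => //=.
  case: (ltngtP a c) => // H; first by rewrite addn0.
  have /val_inj Hac : val a = val c by [].
  by move: E; rewrite Hac (negbTE (irr c)).
rewrite (reindex_inj (@sw_inj n)) /= mul2n -addnn; congr (_ + _).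
by apply: eq_bigr => [[a c]] _ /=; rewrite sy gs.
Qed.

Lemma handshake (n : nat) (e : rel 'I_n) : simple_graph e ->
  \sum_v deg e v = 2 * nedges e.
Proof.
move=> sg.
have -> : \sum_v deg e v = \sum_(p : 'I_n * 'I_n) (if e p.1 p.2 then 1 else 0).
  rewrite (eq_bigr (fun v => \sum_u (e v u : nat))); last by move=> v _; rewrite deg_sum.
  rewrite pair_big /=; apply: eq_bigr => p _; by case: (e p.1 p.2).
rewrite (sym_sum (g := fun _ _ => 1)) //; congr (_ * _).
rewrite /nedges card_sum; apply: eq_bigr => p _; by case: (_ && _).
Qed.

Lemma M2E (n : nat) (e : rel 'I_n) : simple_graph e ->
  2 * M2 e = \sum_(p : 'I_n * 'I_n) (if e p.1 p.2 then deg e p.1 * deg e p.2 else 0).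
Proof.
move=> sg; rewrite (sym_sum (g := fun a b => deg e a * deg e b)) //; last by move=> a c; rewrite mulnC.
by rewrite /M2 big_mkcond.
Qed.

Fixpoint layer (n : nat) (e : rel 'I_n) (r : 'I_n) (k : nat) : {set 'I_n} :=
  if k is k'.+1 then layer e r k' :|: [set z | [exists u in layer e r k', e u z]]
  else [set r].

Lemma layer_path n (e : rel 'I_n) r (p : seq 'I_n) : forall x k,
  x \in layer e r k -> path e x p -> last x p \in layer e r (k + size p).
Proof.
elim: p => [|y p IH] x k Hx /=; first by rewrite addn0.
move=> /andP [Hxy Hp]; rewrite addnS -addSn; apply: IH Hp.
rewrite /= inE; apply/orP; right; rewrite inE; apply/existsP; exists x; by rewrite Hx.
Qed.

Lemma conn_lb (n : nat) (e : rel 'I_n) : (forall u v, e u v = e v u) ->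
  (forall u v, connect e u v) -> n.-1 <= nedges e.
Proof.
move=> sy conn.
case: n e sy conn => [|n] e sy conn //.
pose r : 'I_n.+1 := ord0.
have hex : forall z, exists k, z \in layer e r k.
  move=> z; have /connectP [p Hp ->] := conn r z.
  exists (0 + size p); apply: layer_path Hp; by rewrite /= inE.
pose h z := ex_minn (hex z).
have hpar : forall z, z != r -> exists u, e u z && (h u < h z).
  move=> z Hz; rewrite /h; case: ex_minnP => k Hk Hmin.
  case: k Hk Hmin => [|k] Hk Hmin; first by move: Hk; rewrite /= inE (negbTE Hz).
  move: Hk; rewrite /= inE => /orP [Hk|].
    by have := Hmin _ Hk; rewrite ltnn.
  rewrite inE => /existsP [u /andP [Hu Heu]]; exists u; rewrite Heu /=.
  case: ex_minnP => m Hm Hmm; by have := Hmm _ Hu.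
pose par z := odflt z [pick u | e u z && (h u < h z)].
have Hpar : forall z, z != r -> e (par z) z && (h (par z) < h z).
  move=> z Hz; rewrite /par; case: pickP => [u Hu //|H0].
  have [u Hu] := hpar z Hz; by rewrite H0 in Hu.
pose f z := if val z < val (par z) then (z, par z) else (par z, z).
have sub : f @: [set~ r] \subset [set p : 'I_n.+1 * 'I_n.+1 | e p.1 p.2 && (val p.1 < val p.2)].
  apply/subsetP => q /imsetP [z Hz ->]; rewrite !inE in Hz.
  have /andP [E1 H1] := Hpar z Hz.
  have Hne : val z != val (par z).
    apply/eqP => /val_inj Hq; by rewrite -Hq ltnn in H1.
  rewrite /f; case: ifP => Hlt; rewrite in_set /=; first by rewrite sy E1.
  by rewrite E1 /= ltn_neqAle eq_sym Hne leqNgt Hlt.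
have inj : {in [set~ r] &, injective f}.
  move=> z1 z2; rewrite !inE => Hz1 Hz2.
  have /andP [_ H1] := Hpar z1 Hz1; have /andP [_ H2] := Hpar z2 Hz2.
  rewrite /f; case: ifP => _; case: ifP => _ [] => A B //.
  - move: H1 H2; rewrite B -A => X Y; by have := ltn_trans X Y; rewrite ltnn.
  - move: H1 H2; rewrite A -B => X Y; by have := ltn_trans X Y; rewrite ltnn.
have := subset_leq_card sub; rewrite card_in_imset // cardsC1 card_ord.
by rewrite /nedges.
Qed.

Definition rem n (e : rel 'I_n) w y : rel 'I_n :=
  fun a b => e a b && ~~ (((a == w) && (b == y)) || ((a == y) && (b == w))).
Definition addE n (e : rel 'I_n) v y : rel 'I_n :=
  fun a b => e a b || (((a == v) && (b == y)) || ((a == y) && (b == v))).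
Definition Fs n (e : rel 'I_n) (f : 'I_n -> nat) :=
  \sum_(p : 'I_n * 'I_n) (if e p.1 p.2 then f p.1 * f p.2 else 0).
Definition Ns n (e : rel 'I_n) (f : 'I_n -> nat) a := \sum_u (if e a u then f u else 0).

Lemma sum_indF (T : finType) (a : T) (F : T -> nat) : \sum_(z : T) (if z == a then F z else 0) = F a.
Proof. by rewrite -big_mkcond big_pred1_eq. Qed.

Lemma sum_split_c (T : finType) (f : T -> nat) a c :
  \sum_z (f z + (if z == a then c else 0)) = \sum_z f z + c.
Proof. by rewrite big_split /= sum_ind. Qed.

Lemma sum_eq1 (T : finType) (a : T) : \sum_(z : T) ((z == a) : nat) = 1.
Proof.
rewrite (eq_bigr (fun z => if z == a then 1 else 0)) ?sum_ind // => z _; by case: eqP.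
Qed.

Lemma Fs_bump n (e : rel 'I_n) f g a : simple_graph e -> (forall z, g z = f z + (z == a)) ->
  Fs e g = Fs e f + 2 * Ns e f a.
Proof.
move=> [sy irr] Hg.
have -> : Fs e g = \sum_(p : 'I_n * 'I_n) ((if e p.1 p.2 then f p.1 * f p.2 else 0) +
   ((if (p.1 == a) && e p.1 p.2 then f p.2 else 0) + (if (p.2 == a) && e p.1 p.2 then f p.1 else 0))).
  apply: eq_bigr => [[x y]] _ /=; rewrite !Hg.
  case: (eqVneq x a) => [->|xa]; case: (eqVneq y a) => [->|ya] /=.
  - by rewrite (negbTE (irr a)).
  - case: (e a y) => //; ring.
  - case: (e x a) => //; ring.
  - case: (e x y) => //; ring.
rewrite big_split /= big_split /= mul2n -addnn; congr (_ + (_ + _)).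
  rewrite -(pair_bigA _ (fun i j => if (i == a) && e i j then f j else 0)) /=.
  rewrite (bigD1 a) //= [X in _ + X]big1 ?addn0; last by move=> i /negbTE ia; apply: big1 => j _; rewrite ia.
  by apply: eq_bigr => j _; rewrite ?eqxx.
rewrite (reindex_inj (@sw_inj n)) /=.
rewrite -(pair_bigA _ (fun i j => if (i == a) && e j i then f j else 0)) /=.
rewrite (bigD1 a) //= [X in _ + X]big1 ?addn0; last by move=> i /negbTE ia; apply: big1 => j _; rewrite ia.
by apply: eq_bigr => j _; rewrite ?eqxx sy.
Qed.

Lemma deg_rem n (e : rel 'I_n) w y : simple_graph e -> e w y ->
  forall z, deg (rem e w y) z + (z == w) + (z == y) = deg e z.
Proof.
move=> [sy irr] ewy z.
have wy : w != y by apply: contraTneq ewy => ->; rewrite irr.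
case: (eqVneq z w) => [->|zw].
  rewrite (negbTE wy) addn0 /deg (cardsD1 y [set u | e w u]) inE ewy addnC; congr (_ + _).
  apply: eq_card => u; by rewrite !inE /rem eqxx (negbTE wy) /= ?orbF andbC.
case: (eqVneq z y) => [->|zy].
  have eyw : e y w by rewrite sy.
  rewrite addn0 /deg (cardsD1 w [set u | e y u]) inE eyw addnC /=; congr (_ + _).
  apply: eq_card => u; by rewrite !inE /rem eqxx eq_sym (negbTE wy) /= ?orbF andbC.
rewrite !addn0 /deg; apply: eq_card => u; by rewrite !inE /rem (negbTE zw) (negbTE zy) /= andbT.
Qed.

Lemma deg_add n (e : rel 'I_n) v y : simple_graph e -> v != y -> ~~ e v y ->
  forall z, deg (addE e v y) z = deg e z + (z == v) + (z == y).
Proof.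
move=> [sy irr] vy nevy z.
case: (eqVneq z v) => [->|zv].
  rewrite (negbTE vy) /deg.
  have -> : [set u | addE e v y v u] = y |: [set u | e v u].
    by apply/setP => u; rewrite !inE /addE eqxx (negbTE vy) /= ?andbF ?orbF orbC.
  rewrite cardsU1 inE nevy /=; lia.
case: (eqVneq z y) => [->|zy].
  have neyv : ~~ e y v by rewrite sy.
  rewrite /deg.
  have -> : [set u | addE e v y y u] = v |: [set u | e y u].
    by apply/setP => u; rewrite !inE /addE eqxx eq_sym (negbTE vy) /= ?andbF ?orbF orbC.
  rewrite cardsU1 inE neyv /=; lia.
rewrite !addn0 /deg; apply: eq_card => u; by rewrite !inE /addE (negbTE zv) (negbTE zy) /= orbF.
Qed.

Ltac kill_neqs :=
  repeat match goal with H : is_true (_ != _) |- _ => try rewrite (negbTE H); clear H end.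

Lemma Fs_move n (e : rel 'I_n) w y v (h : 'I_n -> nat) : simple_graph e -> e w y -> v != y -> v != w -> ~~ e v y ->
  Fs (addE (rem e w y) v y) h + 2 * (h w * h y) = Fs e h + 2 * (h v * h y).
Proof.
move=> [sy irr] ewy vy vw nevy.
have wy : w != y by apply: contraTneq ewy => ->; rewrite (negbTE (irr y)).
have eyw : e y w by rewrite sy.
have neyv : ~~ e y v by rewrite sy.
have yw : y != w by rewrite eq_sym.
have yv : y != v by rewrite eq_sym.
have wv : w != v by rewrite eq_sym.
pose H (p : 'I_n * 'I_n) := h p.1 * h p.2.
have key : forall p : 'I_n * 'I_n,
  (if addE (rem e w y) v y p.1 p.2 then H p else 0) + ((if p == (w, y) then H p else 0) + (if p == (y, w) then H p else 0))
  = (if e p.1 p.2 then H p else 0) + ((if p == (v, y) then H p else 0) + (if p == (y, v) then H p else 0)).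
  move=> [a b]; rewrite /addE /rem !xpair_eqE /=.
  case: (eqVneq a w) => [->|aw]; last case: (eqVneq a y) => [->|ay]; last case: (eqVneq a v) => [->|av];
  (case: (eqVneq b w) => [->|bw]; last case: (eqVneq b y) => [->|by']; last case: (eqVneq b v) => [->|bv]);
  rewrite ?ewy ?eyw ?(negbTE nevy) ?(negbTE neyv) ?(negbTE (irr _)) ?eqxx; kill_neqs; by rewrite /= ?addn0 ?andbT ?orbF.
have E : \sum_(p : 'I_n * 'I_n) ((if addE (rem e w y) v y p.1 p.2 then H p else 0) + ((if p == (w, y) then H p else 0) + (if p == (y, w) then H p else 0)))
  = \sum_(p : 'I_n * 'I_n) ((if e p.1 p.2 then H p else 0) + ((if p == (v, y) then H p else 0) + (if p == (y, v) then H p else 0))).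
  by apply: eq_bigr => p _; exact: key.
move: E; rewrite !big_split /= !sum_indF /= => E.
rewrite /Fs /H /= in E *. move: E; rewrite (mulnC (h y) (h w)) (mulnC (h y) (h v)) => E.
lia.
Qed.

Lemma simple_rem n (e : rel 'I_n) w y : simple_graph e -> simple_graph (rem e w y).
Proof.
move=> [sy irr]; split.
  move=> a b; rewrite /rem sy; congr (_ && ~~ _); by case: (a == w); case: (b == y); case: (a == y); case: (b == w).
by move=> z; rewrite /rem (negbTE (irr z)).
Qed.

Lemma simple_add n (e : rel 'I_n) v y : simple_graph e -> v != y -> simple_graph (addE e v y).
Proof.
move=> [sy irr] vy; split.
  move=> a b; rewrite /addE sy; congr (_ || _); by case: (a == v); case: (b == y); case: (a == y); case: (b == v).
move=> z; rewrite /addE (negbTE (irr z)) /=.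
case: (eqVneq z v) => [->|zv] /=; first by rewrite ?eqxx ?(negbTE vy) ?andbF.
by rewrite andbF.
Qed.

Lemma deg_nb n (e : rel 'I_n) a b : e a b -> 0 < deg e a.
Proof. by move=> eab; apply/card_gt0P; exists b; rewrite inE. Qed.

Lemma sum_ext_eq (T : finType) (f g : T -> nat) a c :
  (forall z, f z + (z == a) = g z + (z == c)) -> \sum_z f z = \sum_z g z.
Proof.
move=> H.
have : \sum_z (f z + (z == a)) = \sum_z (g z + (z == c)) by apply: eq_bigr => z _; exact: H.
rewrite !big_split /= !sum_eq1; lia.
Qed.

Lemma ar1 (X Y : nat) : X + 3 = Y + 7 -> Y < X.
Proof. lia. Qed.

Lemma ar2 (m2e m2T Fe FT Fe2 FT2 N1 N2 d : nat) :
  2 * m2e = Fe -> 2 * m2T = FT -> Fe2 = Fe + 2 * N1 -> FT2 = FT + 2 * N2 ->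
  FT2 + 2 * (2 * d) = Fe2 + 2 * (4 * d) -> 3 <= N1 -> N2 <= 4 -> 0 < d -> m2e < m2T.
Proof. lia. Qed.

Lemma surgery n (e : rel 'I_n) w v : chemical_tree e -> deg e w = 2 -> deg e v = 3 ->
  exists e' : rel 'I_n, chemical_tree e' /\ nbranch e' = nbranch e /\ M1 e < M1 e' /\ M2 e < M2 e'.
Proof.
move=> [[sg [conn ne]] d4] dw dv.
have [sy irr] := sg.
have wv : w != v by apply/eqP => E; move: dw; rewrite E dv.
have vw : v != w by rewrite eq_sym.
have /connectP [p Hp Hl] := conn w v.
case: (shortenP Hp) Hl => p' Hp' Hu _ Hl.
case: p' Hp' Hu Hl => [|u p''] Hp' Hu Hl; first by move: wv; rewrite Hl /= eqxx.
move: Hp' => /= /andP [ewu Hp''].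
have [y /andP [yu ewy]] : exists y, (y != u) && e w y.
  have : 0 < #|[set z | e w z] :\ u|.
    have := cardsD1 u [set z | e w z]; rewrite -/(deg e w) dw; case: (u \in _) => /= H; lia.
  move=> /card_gt0P [y]; rewrite !inE => Hy; by exists y.
have wy : w != y by apply: contraTneq ewy => ->; rewrite (negbTE (irr y)).
have sg0 : simple_graph (rem e w y) by apply: simple_rem.
have c0 : connect (rem e w y) w v.
  apply/connectP; exists (u :: p''); last done.
  rewrite /=; apply/andP; split.
    by rewrite /rem ewu eqxx (negbTE wy) /= orbF eq_sym yu.
  apply: (sub_in_path (P := predC1 w)) Hp''.
    move=> a b; rewrite !inE => aw bw eab.
    by rewrite /rem eab (negbTE aw) (negbTE bw) /= !andbF.
  have /andP [Hwn _] := Hu; apply/allP => x Hx /=.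
  by apply: contraNneq Hwn => <-.
have nedges0 : 2 * nedges (rem e w y) + 2 = 2 * nedges e.
  rewrite -!handshake //.
  have : \sum_z (deg (rem e w y) z + (z == w) + (z == y)) = \sum_z deg e z.
    by apply: eq_bigr => z _; exact: deg_rem.
  rewrite !big_split /= !sum_eq1; lia.
have sy0 : forall a b, rem e w y a b = rem e w y b a by case: sg0.
have key : ~~ connect (rem e w y) w y.
  apply/negP => cwy.
  have conn0 : forall a b, connect (rem e w y) a b.
    move=> a b; apply: (connect_sub _ (conn a b)) => x z exz.
    case E: (rem e w y x z); first exact: connect1.
    move: E; rewrite /rem exz /= => /negbFE /orP [/andP [/eqP -> /eqP ->]|/andP [/eqP -> /eqP ->]] //.
    by rewrite (sym_connect_sym sy0).
  have := conn_lb sy0 conn0.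
  move: nedges0; rewrite ne; lia.
have vy : v != y by apply/eqP => E; move: key; rewrite E in c0; rewrite c0.
have nevy : ~~ e v y.
  apply: contraNN key => evy; apply: connect_trans c0 (connect1 _).
  by rewrite /rem evy (negbTE vw) (negbTE vy) /= ?andbF.
have nevy0 : ~~ rem e w y v y by rewrite /rem (negbTE nevy).
set T' := addE (rem e w y) v y.
have sgT : simple_graph T' by apply: simple_add.
have dT : forall z, deg T' z + (z == w) = deg e z + (z == v).
  move=> z; rewrite (deg_add sg0 vy nevy0) -(deg_rem sg ewy z); ring.
have dTw : deg T' w = 1 by have := dT w; rewrite eqxx (negbTE wv) dw addn0 addn1; case.
have dTv : deg T' v = 4 by have := dT v; rewrite eqxx (negbTE vw) dv addn0 => ->.
have dTz : forall z, z != w -> z != v -> deg T' z = deg e z.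
  by move=> z zw zv; have := dT z; rewrite (negbTE zw) (negbTE zv) !addn0.
have cT : connect T' w v.
  apply: (connect_sub _ c0) => x z H; apply: connect1; by rewrite /T' /addE H.
have connT : forall a b, connect T' a b.
  move=> a b; apply: (connect_sub _ (conn a b)) => x z exz.
  case E: (rem e w y x z); first by apply: connect1; rewrite /T' /addE E.
  have cwy : connect T' w y.
    apply: connect_trans cT (connect1 _); by rewrite /T' /addE !eqxx /= orbT.
  move: E; rewrite /rem exz /= => /negbFE /orP [/andP [/eqP -> /eqP ->]|/andP [/eqP -> /eqP ->]] //.
  have [syT _] := sgT.
  by rewrite (sym_connect_sym syT).
have nT : nedges T' = n.-1.
  have : 2 * nedges T' = 2 * nedges e.
    rewrite -(handshake sgT) -(handshake sg); exact: (sum_ext_eq (a := w) (c := v)).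
  by rewrite ne => /eqP; rewrite eqn_pmul2l // => /eqP.
have chemT : chemical_tree T'.
  split; first by split; [exact: sgT | split; [exact: connT | exact: nT]].
  move=> z; case: (eqVneq z w) => [->|zw]; first by rewrite dTw.
  case: (eqVneq z v) => [->|zv]; first by rewrite dTv.
  by rewrite dTz.
exists T'; split; first exact: chemT.
split.
  rewrite /nbranch; apply: eq_card => z; rewrite !inE.
  case: (eqVneq z w) => [->|zw]; first by rewrite dTw dw.
  case: (eqVneq z v) => [->|zv]; first by rewrite dTv dv.
  by rewrite dTz.
split.
  have : \sum_z (deg T' z ^ 2 + (if z == w then 3 else 0)) = \sum_z (deg e z ^ 2 + (if z == v then 7 else 0)).
    apply: eq_bigr => z _.
    case: (eqVneq z w) => [->|zw]; first by rewrite dTw dw (negbTE wv).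
    case: (eqVneq z v) => [->|zv]; first by rewrite dTv dv.
    by rewrite dTz.
  rewrite !sum_split_c /M1; exact: ar1.
have M2e : 2 * M2 e = Fs e (deg e) := M2E sg.
have M2T : 2 * M2 T' = Fs T' (deg T') := M2E sgT.
pose D2 := fun z => deg e z + (z == v).
have B1 : Fs e D2 = Fs e (deg e) + 2 * Ns e (deg e) v := Fs_bump sg (fun z => erefl).
have B2 : Fs T' D2 = Fs T' (deg T') + 2 * Ns T' (deg T') w := Fs_bump sgT (fun z => esym (dT z)).
have B3 : Fs T' D2 + 2 * (D2 w * D2 y) = Fs e D2 + 2 * (D2 v * D2 y) := Fs_move D2 sg ewy vy vw nevy.
have D2w : D2 w = 2 by rewrite /D2 dw (negbTE wv).
have D2v : D2 v = 4 by rewrite /D2 dv eqxx.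
have D2y : 0 < D2 y by rewrite /D2; apply: leq_trans (leq_addr _ _); apply: (@deg_nb _ e y w); rewrite sy.
have N1 : 3 <= Ns e (deg e) v.
  rewrite -dv deg_sum /Ns; apply: leq_sum => t _; case E: (e v t) => //=.
  by apply: (@deg_nb _ e t v); rewrite sy.
have N2 : Ns T' (deg T') w <= 4.
  have : Ns T' (deg T') w <= \sum_u 4 * (T' w u : nat).
    apply: leq_sum => t _; case: (T' w t) => //=; rewrite muln1; by case: chemT.
  by rewrite -big_distrr -deg_sum dTw.
move: B3; rewrite D2w D2v => B3.
exact: (ar2 M2e M2T B1 B2 B3 N1 N2 D2y).
Qed.

Lemma cnt (T : finType) (D : T -> nat) (f : nat -> nat) : (forall z, 0 < D z <= 4) ->
  \sum_z f (D z) = f 1 * \sum_z (D z == 1 : nat) + f 2 * \sum_z (D z == 2 : nat)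
                 + f 3 * \sum_z (D z == 3 : nat) + f 4 * \sum_z (D z == 4 : nat).
Proof.
move=> H; rewrite !big_distrr -!big_split; apply: eq_bigr => z _ /=.
have := H z; case: (D z) => [|[|[|[|[|k]]]]] //= _; ring.
Qed.

Lemma deg_pos n (e : rel 'I_n) : is_tree e -> 1 < n -> forall z, 0 < deg e z.
Proof.
move=> [sg [conn _]] n1 z.
have : 0 < #|[set~ z]| by rewrite cardsC1 card_ord; case: n n1 e sg conn z => [|[|n]].
move=> /card_gt0P [z']; rewrite !inE => zz.
have /connectP [p Hp Hl] := conn z z'.
case: p Hp Hl => [|u p] /= Hp Hl; first by rewrite Hl eqxx in zz.
move: Hp => /andP [ezu _]; exact: deg_nb ezu.
Qed.

Lemma ndegE n (e : rel 'I_n) i : ndeg e i = \sum_z (deg e z == i : nat).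
Proof. by rewrite /ndeg card_sum. Qed.

Lemma no_both n b (T : rel 'I_n) : in_CTstar b T ->
  ((forall T' : rel 'I_n, in_CTstar b T' -> (M1 T' <= M1 T)%N) \/
   (forall T' : rel 'I_n, in_CTstar b T' -> (M2 T' <= M2 T)%N)) ->
  ~ (0 < ndeg T 2 /\ 0 < ndeg T 3).
Proof.
move=> [chem nb] Hmax [/card_gt0P [w] Hw /card_gt0P [v] Hv].
move: Hw Hv; rewrite !inE => /eqP dw /eqP dv.
have [T' [chT' [nbT' [m1 m2]]]] := surgery chem dw dv.
have inT' : in_CTstar b T' by split; rewrite // nbT'.
case: Hmax => H; have := H T' inT'; by rewrite leqNgt ?m1 ?m2.
Qed.

Lemma counts n b (T : rel 'I_n) : 2 < n -> in_CTstar b T ->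
  [/\ n = ndeg T 1 + ndeg T 2 + ndeg T 3 + ndeg T 4,
      ndeg T 1 + 2 * ndeg T 2 + 3 * ndeg T 3 + 4 * ndeg T 4 = 2 * n.-1 &
      b = ndeg T 3 + ndeg T 4].
Proof.
move=> n2 [[[sg [conn ne]] d4] nb].
have H : forall z, 0 < deg T z <= 4.
  have Tt : is_tree T by split.
  have n1' : 1 < n by exact: ltnW.
  by move=> z; rewrite d4 andbT (deg_pos Tt n1').
split.
- have Hn : \sum_(z : 'I_n) 1 = n by rewrite sum1_card card_ord.
  have := cnt (fun _ => 1) H; rewrite Hn !ndegE => E; lia.
- have := cnt id H; rewrite !ndegE /= handshake // ne => E; lia.
- have := cnt (fun i => (2 < i : nat)) H; rewrite !ndegE /= -nb /nbranch card_sum => E.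
  rewrite (eq_bigr _ (fun z _ => erefl)) E; lia.
Qed.

Local Open Scope ring_scope.

Lemma fin_arith (n b n1 n2 n3 n4 : nat) : (1 <= b)%N -> (2 * b + 2 < n)%N ->
  n = (n1 + n2 + n3 + n4)%N -> (n1 + 2 * n2 + 3 * n3 + 4 * n4 = 2 * n.-1)%N -> b = (n3 + n4)%N ->
  ~ ((0 < n2)%N /\ (0 < n3)%N) ->
  ((0 < n2)%N ->
     (n1)%:Z = 2 * b%:Z + 2 /\ (n2)%:Z = n%:Z - 3 * b%:Z - 2 /\
     (n3)%:Z = 0 /\ (n4)%:Z = b%:Z) /\
  (n2 = 0%N <->
     (n1)%:Z = n%:Z - b%:Z /\ (n3)%:Z = 3 * b%:Z - n%:Z + 2 /\
     (n4)%:Z = n%:Z - 2 * b%:Z - 2).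
Proof.
move=> H1 H2 E1 E2 E3 K.
have K' : n2 = 0%N \/ n3 = 0%N by lia.
split; first by move=> h; lia.
split; [move=> h | move=> [A [B C]]]; lia.
Qed.

Unset Implicit Arguments.

Theorem lemma8 (n b : nat) (T : rel 'I_n) :
  (1 <= b)%N -> (2 * b + 2 < n)%N ->
  in_CTstar b T ->
  ((forall T' : rel 'I_n, in_CTstar b T' -> (M1 T' <= M1 T)%N) \/
   (forall T' : rel 'I_n, in_CTstar b T' -> (M2 T' <= M2 T)%N)) ->
  ((0 < ndeg T 2)%N ->
     (ndeg T 1)%:Z = 2 * b%:Z + 2 /\ (ndeg T 2)%:Z = n%:Z - 3 * b%:Z - 2 /\
     (ndeg T 3)%:Z = 0 /\ (ndeg T 4)%:Z = b%:Z) /\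
  (ndeg T 2 = 0%N <->
     (ndeg T 1)%:Z = n%:Z - b%:Z /\ (ndeg T 3)%:Z = 3 * b%:Z - n%:Z + 2 /\
     (ndeg T 4)%:Z = n%:Z - 2 * b%:Z - 2).
Proof.
move=> b1 bn inT Hmax.
have n2 : (2 < n)%N by lia.
have [E1 E2 E3] := counts n2 inT.
exact: (fin_arith b1 bn E1 E2 E3 (no_both inT Hmax)).
Qed.
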